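(* For every $T\ge1$ and $\tau_0\in\{1,\dots,T\}$ there exist parameters $\eta>0$ and $\alpha\in[0,1]$ (depending on $\tau_0$, $T$ and $d$) such that the fixed-share algorithm with these parameters satisfies, for all loss vectors $\ell_1,\dots,\ell_T\in[0,1]^d$, \[ \mathcal R_T^{\tau_0\text{-adapt}}\le\sqrt{\frac{\tau_0}{2}\Big(\tau_0\,h\Big(\frac1{\tau_0}\Big)+\ln d\Big)}\le\sqrt{\frac{\tau_0}{2}\ln(ed\tau_0)}. \]
   Context: Let $d\ge1$ and $\Delta_d=\{q\in[0,1]^d:\sum_{i=1}^d q_i=1\}$. The generalized share algorithm with learning rate $\eta>0$ and mixing functions $\psi_t:[0,1]^{td}\to\Delta_d$ ($t\ge2$) works as follows: $\hat p_1=v_1=(1/d,\dots,1/d)$. At each round $t=1,2,\dots$ it predicts $\hat p_t=(\hat p_{1,t},\dots,\hat p_{d,t})\in\Delta_d$, observes a loss vector $\ell_t=(\ell_{1,t},\dots,\ell_{d,t})\in[0,1]^d$ (arbitrary), and suffers loss $\hat p_t^\top\ell_t$. It then forms the pre-weights $v_{j,t+1}=\hat p_{j,t}e^{-\eta\ell_{j,t}}/\sum_{i=1}^d\hat p_{i,t}e^{-\eta\ell_{i,t}}$ for $j=1,\dots,d$, sets $v_{t+1}=(v_{1,t+1},\dots,v_{d,t+1})$, and defines $\hat p_{t+1}=\psi_{t+1}(V_{t+1})$ where $V_{t+1}=[v_{i,s}]_{1\le i\le d,1\le s\le t+1}$ is the $d\times(t+1)$ matrix of all pre-weights so far. The fixed-share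 algorithm with parameters $\eta>0$, $\alpha\in[0,1]$ is the generalized share algorithm with the mixing rule $\hat p_{j,t+1}=\alpha/d+(1-\alpha)v_{j,t+1}$ for all $j$ and $t\ge1$. The $\tau_0$-adaptive regret is $\mathcal R_T^{\tau_0\text{-adapt}}=\max\big\{\sum_{t=r}^s\hat p_t^\top\ell_t-\min_{q\in\Delta_d}\sum_{t=r}^sq^\top\ell_t\big\}$, the maximum over integers $1\le r\le s\le T$ with $s+1-r\le\tau_0$. $h(x)=-x\ln x-(1-x)\ln(1-x)$ is the binary entropy on $[0,1]$ (with $0\ln0=0$). *)

(* Defs.v *)
From Stdlib Require Import Reals Lra.
Open Scope R_scope.

Fixpoint sumR (n : nat) (f : nat -> R) : R :=
  match n with
  | O => 0
  | S m => sumR m f + f m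
  end.

(* sum_{t=r}^{s} f t  (= 0 if s < r) *)
Definition sum_range (r s : nat) (f : nat -> R) : R :=
  sumR (S s - r) (fun k => f (r + k)%nat).

(* Experts are indexed 0..d-1; rounds are indexed 1,2,...;
   ell t i is the loss of expert i at round t. *)

Definition preweight (d : nat) (eta : R) (p : nat -> R) (l : nat -> R) (j : nat) : R :=
  p j * exp (- eta * l j) / sumR d (fun i => p i * exp (- eta * l i)).

(* Fixed-share predictions: fixed_share d eta alpha ell t = \hat p_t
   for t >= 1 (the value at t = 0 is irrelevant and set equal to \hat p_1). *)
Fixpoint fixed_share (d : nat) (eta alpha : R) (ell : nat -> nat -> R) (t : nat)
  : nat -> R :=
  match t with
  | O => fun _ => 1 / INR d
  | S O => fun _ => 1 / INR d
  | S ((S _) as t') =>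
      fun j => alpha / INR d
               + (1 - alpha) * preweight d eta (fixed_share d eta alpha ell t') (ell t') j
  end.

Definition dotR (d : nat) (q l : nat -> R) : R := sumR d (fun i => q i * l i).

Definition in_simplex (d : nat) (q : nat -> R) : Prop :=
  (forall i, (i < d)%nat -> 0 <= q i <= 1) /\ sumR d q = 1.

Definition xlnx (x : R) : R := if Req_EM_T x 0 then 0 else x * ln x.

Definition hbin (x : R) : R := - xlnx x - xlnx (1 - x).

Definition interval_regret (d : nat) (p : nat -> nat -> R) (ell : nat -> nat -> R)
  (q : nat -> R) (r s : nat) : R :=
  sum_range r s (fun t => dotR d (p t) (ell t) - dotR d q (ell t)).

(* Main.v *)
Require Import Defs.
From Stdlib Require Import Reals Lra Lia.
From Coquelicot Require Import Coquelicot.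
Open Scope R_scope.

Lemma sumR_ext n f g : (forall i, (i < n)%nat -> f i = g i) -> sumR n f = sumR n g.
Proof. induction n; simpl; intros H; auto. rewrite IHn by (intros; apply H; lia). rewrite H by lia. auto. Qed.

Lemma sumR_plus n f g : sumR n (fun i => f i + g i) = sumR n f + sumR n g.
Proof. induction n; simpl; [ring|]. rewrite IHn. ring. Qed.

Lemma sumR_scal n c f : sumR n (fun i => c * f i) = c * sumR n f.
Proof. induction n; simpl; [ring|]. rewrite IHn. ring. Qed.

Lemma sumR_minus n f g : sumR n (fun i => f i - g i) = sumR n f - sumR n g.
Proof. induction n; simpl; [ring|]. rewrite IHn. ring. Qed.

Lemma sumR_const n c : sumR n (fun _ => c) = INR n * c.
Proof. induction n; simpl sumR; [simpl; ring|]. rewrite IHn, S_INR. ring. Qed.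

Lemma sumR_le n f g : (forall i, (i < n)%nat -> f i <= g i) -> sumR n f <= sumR n g.
Proof. induction n; simpl; intros H; [lra|]. pose proof (H n ltac:(lia)).
  pose proof (IHn ltac:(intros; apply H; lia)). lra. Qed.

Lemma sumR_nonneg n f : (forall i, (i < n)%nat -> 0 <= f i) -> 0 <= sumR n f.
Proof. intros H. replace 0 with (sumR n (fun _ => 0)).
  apply sumR_le; auto. rewrite sumR_const; ring. Qed.

Lemma sumR_pos n f : (1 <= n)%nat -> (forall i, (i < n)%nat -> 0 < f i) -> 0 < sumR n f.
Proof. destruct n; [lia|]. intros _ H. simpl.
  pose proof (sumR_nonneg n f ltac:(intros; left; apply H; lia)).
  pose proof (H n ltac:(lia)). lra. Qed.

Lemma sumR_term_le n f j : (forall i, (i < n)%nat -> 0 <= f i) -> (j < n)%nat -> f j <= sumR n f.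
Proof. induction n; simpl; intros H Hj; [lia|].
  pose proof (sumR_nonneg n f ltac:(intros; apply H; lia)).
  destruct (Nat.eq_dec j n) as [->|Hne]. lra.
  pose proof (IHn ltac:(intros; apply H; lia) ltac:(lia)). pose proof (H n ltac:(lia)). lra. Qed.

Lemma sumR_exch n m (F : nat -> nat -> R) :
  sumR n (fun i => sumR m (fun j => F i j)) = sumR m (fun j => sumR n (fun i => F i j)).
Proof. induction n; simpl. rewrite sumR_const; simpl; ring.
  rewrite IHn, <- sumR_plus. auto. Qed.
Lemma exp_le_mono x y : x <= y -> exp x <= exp y.
Proof. intros [H|H]; [left; apply exp_increasing; auto | right; subst; auto]. Qed.

Lemma D_pos m x : 0 <= m <= 1 -> 0 < 1 - m + m * exp (- x).
Proof. intros Hm. pose proof (exp_pos (-x)). nra. Qed.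

Lemma hoeff_scalar m eta : 0 <= m <= 1 -> 0 <= eta ->
  1 - m + m * exp (- eta) <= exp (- eta * m + eta ^ 2 / 8).
Proof.
  intros Hm He.
  set (D := fun x => 1 - m + m * exp (- x)).
  set (h := fun x => x / 4 - m + m * exp (- x) / D x).
  set (g := fun x => x ^ 2 / 8 - x * m - ln (D x)).
  assert (Dp : forall x, 0 < D x) by (intro; apply D_pos; auto).
  assert (Hh : forall x, 0 <= x -> 0 <= h x).
  { intros x Hx. destruct (Req_dec x 0) as [->|Hx0].
    - unfold h, D. rewrite Ropp_0, exp_0. field_simplify; [lra|]. lra.
    - destruct (MVT_cor2 h (fun x => 1/4 - m * exp (- x) * (1 - m) / (D x)^2) 0 x)
        as [c [Hc1 Hc2]]; [lra| |].
      + intros c _. apply is_derive_Reals. unfold h, D.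
        auto_derive. { pose proof (Dp c). unfold D in H. lra. }
        pose proof (Dp c). unfold D in H. field. lra.
      + assert (h 0 = 0). { unfold h, D. rewrite Ropp_0, exp_0. field. lra. }
        assert (0 <= 1/4 - m * exp (- c) * (1 - m) / (D c)^2).
        { pose proof (Dp c). pose proof (exp_pos (-c)).
          assert (m * exp (- c) * (1 - m) <= (D c)^2 / 4).
          { unfold D. pose proof (pow2_ge_0 (1 - m - m * exp (- c))). nra. }
          apply Rle_trans with (1/4 - (D c)^2/4 / (D c)^2).
          - right. field. lra.
          - unfold Rminus. apply Rplus_le_compat_l. apply Ropp_le_contravar.
            apply Rmult_le_compat_r. left. apply Rinv_0_lt_compat. nra. lra. }
        nra. }
  assert (Hg : 0 <= g eta).
  { destruct (Req_dec eta 0) as [->|He0].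
    - unfold g, D. rewrite Ropp_0, exp_0. replace (1 - m + m * 1) with 1 by ring.
      rewrite ln_1. lra.
    - destruct (MVT_cor2 g h 0 eta) as [c [Hc1 Hc2]]; [lra| |].
      + intros c _. apply is_derive_Reals. unfold g, h, D.
        auto_derive. { pose proof (Dp c). unfold D in H. lra. }
        pose proof (Dp c). unfold D in H. field. lra.
      + assert (g 0 = 0). { unfold g, D. rewrite Ropp_0, exp_0.
          replace (1 - m + m * 1) with 1 by ring. rewrite ln_1. lra. }
        pose proof (Hh c ltac:(lra)). nra. }
  unfold g in Hg. change (D eta <= exp (- eta * m + eta ^ 2 / 8)). rewrite <- (exp_ln (D eta)) by apply Dp.
  apply exp_le_mono; lra.
Qed.


Lemma exp_convex x eta : 0 <= x <= 1 -> exp (- eta * x) <= 1 - x + x * exp (- eta).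
Proof.
  intros Hx. set (c := - eta * x).
  assert (A : exp c * (1 + (- eta - c)) <= exp (- eta)).
  { replace (exp (- eta)) with (exp c * exp (- eta - c)) by (rewrite <- exp_plus; f_equal; ring).
    apply Rmult_le_compat_l. left; apply exp_pos. apply exp_ineq1_le. }
  assert (B : exp c * (1 + (0 - c)) <= 1).
  { assert (exp c * exp (0 - c) = 1) by (rewrite <- exp_plus; replace (c + (0 - c)) with 0 by ring; apply exp_0).
    pose proof (exp_ineq1_le (0 - c)). pose proof (exp_pos c). nra. }
  assert (E : x * (exp c * (1 + (- eta - c))) + (1 - x) * (exp c * (1 + (0 - c))) = exp c)
    by (unfold c; ring).
  nra.
Qed.

Section FS.
Variables (d : nat) (eta alpha : R) (ell : nat -> nat -> R).
Hypothesis Hd : (1 <= d)%nat.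
Hypothesis Ha : 0 <= alpha <= 1.

Definition Zs (p l : nat -> R) := sumR d (fun i => p i * exp (- eta * l i)).

Lemma Z_pos p l : (forall i, (i < d)%nat -> 0 < p i) -> 0 < Zs p l.
Proof. intros H. apply sumR_pos; auto. intros i Hi. pose proof (H i Hi). pose proof (exp_pos (- eta * l i)). nra. Qed.

Lemma pw_sum p l : 0 < Zs p l -> sumR d (preweight d eta p l) = 1.
Proof. intros HZ. unfold preweight. rewrite (sumR_ext _ _ (fun j => / Zs p l * (p j * exp (- eta * l j)))).
  rewrite sumR_scal. fold (Zs p l). field. lra. intros; unfold Rdiv, Zs; ring. Qed.

Lemma pw_pos p l j : (forall i, (i < d)%nat -> 0 < p i) -> (j < d)%nat -> 0 < preweight d eta p l j.
Proof. intros H Hj. unfold preweight. fold (Zs p l). pose proof (Z_pos p l H). pose proof (H j Hj).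
  pose proof (exp_pos (- eta * l j)). unfold Rdiv. apply Rmult_lt_0_compat. nra. apply Rinv_0_lt_compat; auto. Qed.

Notation P := (fixed_share d eta alpha ell).

Lemma fs_SS k j : P (S (S k)) j = alpha / INR d + (1 - alpha) * preweight d eta (P (S k)) (ell (S k)) j.
Proof. reflexivity. Qed.

Lemma INRd_pos : 0 < INR d.
Proof. apply lt_0_INR; lia. Qed.

Lemma fs_inv t : (forall j, (j < d)%nat -> 0 < P t j /\ alpha / INR d <= P t j) /\ sumR d (P t) = 1.
Proof.
  pose proof INRd_pos.
  assert (base : (forall j, (j < d)%nat -> 0 < 1 / INR d /\ alpha / INR d <= 1 / INR d) /\ sumR d (fun _ => 1 / INR d) = 1).
  { split. intros; split. apply Rdiv_lt_0_compat; lra. unfold Rdiv; apply Rmult_le_compat_r. left; apply Rinv_0_lt_compat; lra. lra.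
    rewrite sumR_const. field. lra. }
  induction t as [|t IH]. exact base. destruct t as [|k]. exact base.
  destruct IH as [IH1 IH2].
  assert (Hp : forall i, (i < d)%nat -> 0 < P (S k) i) by (intros; apply IH1; auto).
  split.
  - intros j Hj. rewrite fs_SS. pose proof (pw_pos _ (ell (S k)) j Hp Hj).
    assert (0 <= alpha / INR d) by (apply Rmult_le_pos; [lra| left; apply Rinv_0_lt_compat; lra]).
    split.
    + destruct (Req_dec alpha 0) as [->|Hne]. lra.
      assert (0 < alpha / INR d) by (apply Rdiv_lt_0_compat; lra). nra.
    + nra.
  - rewrite (sumR_ext _ _ (fun j => alpha / INR d + (1 - alpha) * preweight d eta (P (S k)) (ell (S k)) j))
      by (intros; apply fs_SS).
    rewrite sumR_plus, sumR_const, sumR_scal, pw_sum by (apply Z_pos; auto). field. lra.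
Qed.

Lemma Z_bound p l : (forall i, (i < d)%nat -> 0 <= p i) -> sumR d p = 1 ->
  (forall i, (i < d)%nat -> 0 <= l i <= 1) -> 0 <= eta ->
  Zs p l <= exp (- eta * dotR d p l + eta ^ 2 / 8).
Proof.
  intros Hp Hs Hl He. set (m := dotR d p l).
  assert (Hm : 0 <= m <= 1).
  { unfold m, dotR. split. apply sumR_nonneg; intros i Hi; pose proof (Hp i Hi); pose proof (Hl i Hi); nra.
    rewrite <- Hs. apply sumR_le. intros i Hi; pose proof (Hp i Hi); pose proof (Hl i Hi); nra. }
  apply Rle_trans with (1 - m + m * exp (- eta)); [|apply hoeff_scalar; auto].
  apply Rle_trans with (sumR d (fun i => p i - p i * l i + (p i * l i) * exp (- eta))).
  - apply sumR_le. intros i Hi. pose proof (exp_convex (l i) eta (Hl i Hi)). pose proof (Hp i Hi). nra.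
  - rewrite sumR_plus, sumR_minus. rewrite (sumR_ext _ (fun i => p i * l i * exp (- eta)) (fun i => exp (- eta) * (p i * l i)))
      by (intros; ring). rewrite sumR_scal. unfold m, dotR. rewrite Hs. lra.
Qed.

Lemma step p l j : (forall i, (i < d)%nat -> 0 < p i) -> sumR d p = 1 ->
  (forall i, (i < d)%nat -> 0 <= l i <= 1) -> 0 <= eta -> (j < d)%nat ->
  p j * exp (eta * dotR d p l - eta * l j - eta ^ 2 / 8) <= preweight d eta p l j.
Proof.
  intros Hp Hs Hl He Hj.
  pose proof (Z_bound p l ltac:(intros; left; auto) Hs Hl He) as ZB.
  pose proof (Z_pos p l Hp) as ZP.
  set (E := - eta * dotR d p l + eta ^ 2 / 8) in *.
  replace (eta * dotR d p l - eta * l j - eta ^ 2 / 8) with (- eta * l j + - E) by (unfold E; ring).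
  rewrite exp_plus, exp_Ropp. unfold preweight. fold (Zs p l). unfold Rdiv.
  rewrite <- Rmult_assoc. apply Rmult_le_compat_l.
  pose proof (Hp j Hj); pose proof (exp_pos (- eta * l j)); nra.
  apply Rinv_le_contravar; auto.
Qed.

Lemma pw_le1 p l j : (forall i, (i < d)%nat -> 0 < p i) -> (j < d)%nat -> preweight d eta p l j <= 1.
Proof. intros Hp Hj. rewrite <- (pw_sum p l (Z_pos p l Hp)). apply sumR_term_le; auto.
  intros; left; apply pw_pos; auto. Qed.

End FS.

Lemma sumR_S n f : sumR (S n) f = sumR n f + f n.
Proof. reflexivity. Qed.

Lemma pow_le_dec x a b : 0 <= x <= 1 -> (a <= b)%nat -> x ^ b <= x ^ a.
Proof. intros Hx Hab. replace b with (a + (b - a))%nat by lia. rewrite pow_add.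
  assert (0 <= x ^ a) by (apply pow_le; lra).
  assert (x ^ (b - a) <= 1) by (rewrite <- (pow1 (b - a)); apply pow_incr; lra). nra. Qed.

Lemma telescope d eta alpha ell T j r : (1 <= d)%nat -> 0 <= alpha <= 1 -> 0 <= eta ->
  (forall t i, (1 <= t <= T)%nat -> (i < d)%nat -> 0 <= ell t i <= 1) ->
  (j < d)%nat -> (1 <= r)%nat -> forall k, (r + k <= T)%nat ->
  fixed_share d eta alpha ell r j * (1 - alpha) ^ k *
    exp (eta * sumR (S k) (fun i => dotR d (fixed_share d eta alpha ell (r + i)%nat) (ell (r + i)%nat) - ell (r + i)%nat j)
         - INR (S k) * eta ^ 2 / 8)
  <= preweight d eta (fixed_share d eta alpha ell (r + k)%nat) (ell (r + k)%nat) j.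
Proof.
  intros Hd Ha He Hl Hj Hr. set (P := fixed_share d eta alpha ell).
  assert (Pinv : forall t, (forall i, (i < d)%nat -> 0 < P t i) /\ sumR d (P t) = 1).
  { intro t. destruct (fs_inv d eta alpha ell Hd Ha t) as [A B]. split; auto. intros; apply A; auto. }
  induction k as [|k IH]; intros Hk.
  - rewrite Nat.add_0_r. cbn [sumR]. rewrite pow_O. rewrite Nat.add_0_r.
    replace (INR 1) with 1 by reflexivity.
    destruct (Pinv r) as [A B].
    pose proof (step d eta Hd (P r) (ell r) j A B ltac:(intros; apply Hl; lia) He Hj).
    match goal with |- context [exp ?e] => assert (Ee : e = eta * dotR d (P r) (ell r) - eta * ell r j - eta ^ 2 / 8) by field end. rewrite Ee.
    rewrite Rmult_1_r. exact H.
  - specialize (IH ltac:(lia)). fold P in IH |- *.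
    replace (r + S k)%nat with (S (r + k)) by lia.
    destruct (Pinv (S (r + k))) as [A B].
    pose proof (step d eta Hd (P (S (r + k))) (ell (S (r + k))) j A B ltac:(intros; apply Hl; lia) He Hj) as St.
    assert (Hrec : (1 - alpha) * preweight d eta (P (r + k)%nat) (ell (r + k)%nat) j <= P (S (r + k)) j).
    { destruct (r + k)%nat as [|n] eqn:E; [lia|]. unfold P. rewrite fs_SS.
      pose proof INRd_pos d Hd. assert (0 <= alpha / INR d) by (apply Rmult_le_pos; [lra| left; apply Rinv_0_lt_compat; lra]). lra. }
    set (X := eta * sumR (S k) (fun i => dotR d (P (r + i)%nat) (ell (r + i)%nat) - ell (r + i)%nat j) - INR (S k) * eta ^ 2 / 8) in *.
    set (dl := eta * dotR d (P (S (r + k))) (ell (S (r + k))) - eta * ell (S (r + k)) j - eta ^ 2 / 8) in *.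
    replace (eta * sumR (S (S k)) (fun i => dotR d (P (r + i)%nat) (ell (r + i)%nat) - ell (r + i)%nat j) - INR (S (S k)) * eta ^ 2 / 8)
      with (X + dl).
    2:{ unfold X, dl. rewrite (sumR_S (S k)). rewrite (S_INR (S k)). replace (r + S k)%nat with (S (r + k)) by lia. field. }
    rewrite exp_plus.
    pose proof (exp_pos dl). pose proof (exp_pos X).
    assert (0 <= 1 - alpha) by lra.
    assert (Hm : P r j * (1 - alpha) ^ S k * (exp X * exp dl) = (1 - alpha) * (P r j * (1 - alpha) ^ k * exp X) * exp dl)
      by (simpl; field).
    rewrite Hm.
    apply Rle_trans with ((1 - alpha) * preweight d eta (P (r + k)%nat) (ell (r + k)%nat) j * exp dl).
    + apply Rmult_le_compat_r; [lra|]. apply Rmult_le_compat_l; lra.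
    + apply Rle_trans with (P (S (r + k)) j * exp dl); [apply Rmult_le_compat_r; lra | exact St].
Qed.

Lemma hform n : (1 <= n)%nat ->
  INR n * hbin (1 / INR n) = ln (INR n) - (INR n - 1) * ln (1 - 1 / INR n).
Proof.
  intros Hn. destruct (Nat.eq_dec n 1) as [->|Hne].
  - replace (INR 1) with 1 by reflexivity. unfold hbin, xlnx.
    replace (1 / 1) with 1 by field. replace (1 - 1) with 0 by ring.
    destruct (Req_EM_T 1 0); [lra|]. destruct (Req_EM_T 0 0); [|lra].
    rewrite ln_1. ring.
  - assert (Ht : 2 <= INR n) by (replace 2 with (INR 2) by reflexivity; apply le_INR; lia).
    unfold hbin, xlnx.
    destruct (Req_EM_T (1 / INR n) 0) as [E|_]. { assert (0 < 1 / INR n) by (apply Rdiv_lt_0_compat; lra). lra. }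
    destruct (Req_EM_T (1 - 1 / INR n) 0) as [E|_].
    { assert (1 / INR n <= 1 / 2) by (apply Rmult_le_compat_l; [lra|]; apply Rinv_le_contravar; lra). lra. }
    unfold Rdiv. rewrite Rmult_1_l, ln_Rinv by lra. field. lra.
Qed.

Lemma L_eq n d : (1 <= n)%nat -> (1 <= d)%nat ->
  ln (INR n * INR d / (1 - 1 / INR n) ^ (n - 1)) = ln (INR d) + INR n * hbin (1 / INR n).
Proof.
  intros Hn Hd. rewrite hform by auto.
  assert (Hdp : 0 < INR d) by (apply lt_0_INR; lia).
  destruct (Nat.eq_dec n 1) as [->|Hne].
  - simpl pow. replace (INR 1) with 1 by reflexivity. replace (1 * INR d / 1) with (INR d) by field.
    rewrite ln_1. ring.
  - assert (Ht : 2 <= INR n) by (replace 2 with (INR 2) by reflexivity; apply le_INR; lia).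
    assert (Hy : 0 < 1 - 1 / INR n).
    { assert (1 / INR n <= 1 / 2) by (apply Rmult_le_compat_l; [lra|]; apply Rinv_le_contravar; lra). lra. }
    unfold Rdiv at 1. rewrite ln_mult, ln_mult, ln_Rinv, ln_pow, minus_INR by (try apply pow_lt; try apply Rinv_0_lt_compat; try apply pow_lt; try nra; try lia; auto).
    replace (INR 1) with 1 by reflexivity. ring.
Qed.

Lemma ln_le_sub1 u : 0 < u -> ln u <= u - 1.
Proof. intros Hu. rewrite <- (ln_exp (u - 1)). apply ln_le; auto.
  pose proof (exp_ineq1_le (u - 1)). lra. Qed.

Lemma second_part n d : (1 <= n)%nat -> (1 <= d)%nat ->
  INR n * hbin (1 / INR n) + ln (INR d) <= ln (exp 1 * INR d * INR n).
Proof.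
  intros Hn Hd. rewrite hform by auto.
  assert (Hdp : 0 < INR d) by (apply lt_0_INR; lia).
  assert (Hnp : 0 < INR n) by (apply lt_0_INR; lia).
  rewrite ln_mult, ln_mult, ln_exp by (try apply exp_pos; try apply Rmult_lt_0_compat; try apply exp_pos; auto).
  assert (- (INR n - 1) * ln (1 - 1 / INR n) <= 1); [|lra].
  destruct (Nat.eq_dec n 1) as [->|Hne].
  - replace (INR 1) with 1 by reflexivity. lra.
  - assert (Ht : 2 <= INR n) by (replace 2 with (INR 2) by reflexivity; apply le_INR; lia).
    assert (Hy : 0 < 1 - 1 / INR n).
    { assert (1 / INR n <= 1 / 2) by (apply Rmult_le_compat_l; [lra|]; apply Rinv_le_contravar; lra). lra. }
    pose proof (ln_le_sub1 (/ (1 - 1 / INR n)) ltac:(apply Rinv_0_lt_compat; lra)) as H.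
    rewrite ln_Rinv in H by lra.
    replace (/ (1 - 1 / INR n) - 1) with (1 / (INR n - 1)) in H by (field; lra).
    assert (0 < INR n - 1) by lra.
    replace (- (INR n - 1) * ln (1 - 1 / INR n)) with ((INR n - 1) * - ln (1 - 1 / INR n)) by ring.
    apply Rle_trans with ((INR n - 1) * (1 / (INR n - 1))).
    apply Rmult_le_compat_l; lra. right; field; lra.
Qed.

Lemma L_nonneg n d : (1 <= n)%nat -> (1 <= d)%nat ->
  ln (INR d) <= ln (INR d) + INR n * hbin (1 / INR n).
Proof.
  intros Hn Hd. rewrite hform by auto.
  assert (0 <= ln (INR n)).
  { destruct (Nat.eq_dec n 1) as [->|]. simpl; rewrite ln_1; lra.
    left. rewrite <- ln_1. apply ln_increasing. lra. replace 1 with (INR 1) by reflexivity. apply lt_INR; lia. }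
  assert (0 <= - (INR n - 1) * ln (1 - 1 / INR n)); [|lra].
  destruct (Nat.eq_dec n 1) as [->|Hne].
  - replace (INR 1) with 1 by reflexivity. lra.
  - assert (Ht : 2 <= INR n) by (replace 2 with (INR 2) by reflexivity; apply le_INR; lia).
    assert (Hy : 0 < 1 - 1 / INR n).
    { assert (1 / INR n <= 1 / 2) by (apply Rmult_le_compat_l; [lra|]; apply Rinv_le_contravar; lra). lra. }
    assert (ln (1 - 1 / INR n) <= 0).
    { rewrite <- ln_1. apply ln_le; auto. assert (0 < 1 / INR n) by (apply Rdiv_lt_0_compat; lra). lra. }
    nra.
Qed.

Lemma core d T tau0 eta ell r s j : (1 <= d)%nat -> (1 <= tau0)%nat -> 0 < eta ->
  (forall t i, (1 <= t <= T)%nat -> (i < d)%nat -> 0 <= ell t i <= 1) ->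
  (1 <= r)%nat -> (r <= s)%nat -> (s <= T)%nat -> (s + 1 - r <= tau0)%nat -> (j < d)%nat ->
  eta * sum_range r s (fun t => dotR d (fixed_share d eta (1 / INR tau0) ell t) (ell t) - ell t j)
  <= (ln (INR d) + INR tau0 * hbin (1 / INR tau0)) + INR tau0 * eta ^ 2 / 8.
Proof.
  intros Hd Htau He Hl Hr Hrs HsT Hlen Hj.
  set (alpha := 1 / INR tau0).
  assert (Htp : 1 <= INR tau0) by (replace 1 with (INR 1) by reflexivity; apply le_INR; lia).
  assert (Hdp : 0 < INR d) by (apply lt_0_INR; lia).
  assert (Ha : 0 <= alpha <= 1).
  { unfold alpha. split. left; apply Rdiv_lt_0_compat; lra.
    unfold Rdiv. rewrite Rmult_1_l. rewrite <- Rinv_1. apply Rinv_le_contravar; lra. }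
  assert (Hap : 0 < alpha) by (unfold alpha; apply Rdiv_lt_0_compat; lra).
  set (k := (s - r)%nat).
  pose proof (telescope d eta alpha ell T j r Hd Ha ltac:(lra) Hl Hj Hr k ltac:(unfold k; lia)) as Tel.
  replace (r + k)%nat with s in Tel by (unfold k; lia).
  set (P := fixed_share d eta alpha ell) in *.
  destruct (fs_inv d eta alpha ell Hd Ha s) as [Ps _].
  pose proof (pw_le1 d eta Hd (P s) (ell s) j ltac:(intros; apply Ps; auto) Hj) as W1.
  destruct (fs_inv d eta alpha ell Hd Ha r) as [Pr _].
  destruct (Pr j Hj) as [A0 A1]. fold P in A0, A1.
  unfold sum_range. replace (S s - r)%nat with (S k) by (unfold k; lia). cbv beta. fold P.
  set (Sm := sumR (S k) (fun i => dotR d (P (r + i)%nat) (ell (r + i)%nat) - ell (r + i)%nat j)) in *.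
  set (X := eta * Sm - INR (S k) * eta ^ 2 / 8) in *.
  set (c := (1 - alpha) ^ (tau0 - 1)).
  assert (Hc : 0 < c).
  { unfold c. destruct (Nat.eq_dec tau0 1) as [->|Hne]. simpl; lra.
    apply pow_lt. unfold alpha. assert (2 <= INR tau0) by (replace 2 with (INR 2) by reflexivity; apply le_INR; lia).
    assert (1 / INR tau0 <= 1 / 2) by (apply Rmult_le_compat_l; [lra|]; apply Rinv_le_contravar; lra). lra. }
  assert (Hc0 : c <= (1 - alpha) ^ k) by (unfold c; apply pow_le_dec; [lra| unfold k; lia]).
  pose proof (exp_pos X).
  assert (Hprod : alpha / INR d * c * exp X <= 1).
  { apply Rle_trans with (P r j * (1 - alpha) ^ k * exp X); [|lra].
    apply Rmult_le_compat_r; [lra|]. apply Rmult_le_compat; auto.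
    apply Rmult_le_pos; [lra| left; apply Rinv_0_lt_compat; lra]. lra. }
  set (M := INR tau0 * INR d / c).
  assert (HM : alpha / INR d * c * M = 1) by (unfold M, alpha; field; lra).
  assert (HeM : exp X <= M).
  { replace (exp X) with (alpha / INR d * c * exp X * M).
    2:{ replace (alpha / INR d * c * exp X * M) with ((alpha / INR d * c * M) * exp X) by ring. rewrite HM; ring. }
    assert (0 < M) by (unfold M; apply Rdiv_lt_0_compat; [nra|lra]). nra. }
  assert (HX : X <= ln (INR d) + INR tau0 * hbin (1 / INR tau0)).
  { rewrite <- L_eq by auto. fold alpha. fold c. fold M. rewrite <- (ln_exp X). apply ln_le; auto. }
  assert (HSk : INR (S k) <= INR tau0) by (apply le_INR; unfold k; lia).
  assert (0 <= eta ^ 2 / 8) by (apply Rmult_le_pos; [apply pow2_ge_0|lra]).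
  assert (INR (S k) * eta ^ 2 / 8 <= INR tau0 * eta ^ 2 / 8).
  { unfold Rdiv. apply Rmult_le_compat_r; [lra|]. apply Rmult_le_compat_r; [apply pow2_ge_0|lra]. }
  unfold X in HX. unfold alpha in *. lra.
Qed.

Lemma decomp d (P : nat -> nat -> R) ell q r s B : in_simplex d q ->
  (forall j, (j < d)%nat -> sum_range r s (fun t => dotR d (P t) (ell t) - ell t j) <= B) ->
  interval_regret d P ell q r s <= B.
Proof.
  intros [Hq Hqs] Hj. unfold interval_regret, sum_range in *.
  set (K := (S s - r)%nat) in *.
  rewrite (sumR_ext K _ (fun i => sumR d (fun j => q j * (dotR d (P (r + i)%nat) (ell (r + i)%nat) - ell (r + i)%nat j)))).
  - rewrite sumR_exch.
    apply Rle_trans with (sumR d (fun j => q j * B)).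
    + apply sumR_le. intros j Hjd. rewrite sumR_scal. apply Rmult_le_compat_l. apply Hq; auto. apply Hj; auto.
    + right. rewrite (sumR_ext _ _ (fun j => B * q j)) by (intros; ring). rewrite sumR_scal, Hqs. ring.
  - intros i Hi. rewrite (sumR_ext _ _ (fun j => dotR d (P (r + i)%nat) (ell (r + i)%nat) * q j - q j * ell (r + i)%nat j)) by (intros; ring).
    rewrite sumR_minus, sumR_scal, Hqs. unfold dotR at 2. ring.
Qed.

Lemma d1_zero eta alpha ell r s : 0 <= alpha <= 1 ->
  sum_range r s (fun t => dotR 1 (fixed_share 1 eta alpha ell t) (ell t) - ell t 0%nat) = 0.
Proof.
  intros Ha. unfold sum_range. rewrite (sumR_ext _ _ (fun _ => 0)).
  rewrite sumR_const; ring.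
  intros i _. destruct (fs_inv 1 eta alpha ell ltac:(lia) Ha (r + i)) as [_ H].
  unfold dotR. simpl in H |- *. assert (E : fixed_share 1 eta alpha ell (r + i) 0%nat = 1) by lra.
  rewrite E. ring.
Qed.

Theorem corollary2 :
  forall (d T tau0 : nat),
    (1 <= d)%nat -> (1 <= T)%nat -> (1 <= tau0 <= T)%nat ->
    exists (eta alpha : R), 0 < eta /\ 0 <= alpha <= 1 /\
      (forall ell : nat -> nat -> R,
         (forall t i, (1 <= t <= T)%nat -> (i < d)%nat -> 0 <= ell t i <= 1) ->
         forall r s : nat, (1 <= r)%nat -> (r <= s)%nat -> (s <= T)%nat ->
           (s + 1 - r <= tau0)%nat ->
           forall q : nat -> R, in_simplex d q ->
             interval_regret d (fixed_share d eta alpha ell) ell q r s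
             <= sqrt (INR tau0 / 2 * (INR tau0 * hbin (1 / INR tau0) + ln (INR d))))
      /\ sqrt (INR tau0 / 2 * (INR tau0 * hbin (1 / INR tau0) + ln (INR d)))
         <= sqrt (INR tau0 / 2 * ln (exp 1 * INR d * INR tau0)).
Proof.
  intros d T tau0 Hd HT Htau.
  assert (Htau1 : (1 <= tau0)%nat) by lia.
  set (L := INR tau0 * hbin (1 / INR tau0) + ln (INR d)).
  assert (Htp : 1 <= INR tau0) by (replace 1 with (INR 1) by reflexivity; apply le_INR; lia).
  assert (Ha : 0 <= 1 / INR tau0 <= 1).
  { split. left; apply Rdiv_lt_0_compat; lra.
    unfold Rdiv. rewrite Rmult_1_l. rewrite <- Rinv_1. apply Rinv_le_contravar; lra. }
  assert (Sec : sqrt (INR tau0 / 2 * L) <= sqrt (INR tau0 / 2 * ln (exp 1 * INR d * INR tau0))).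
  { apply sqrt_le_1_alt. apply Rmult_le_compat_l. lra. unfold L. apply second_part; auto. }
  assert (HL0 := L_nonneg tau0 d Htau1 Hd).
  destruct (Nat.eq_dec d 1) as [->|Hd2].
  - exists 1, (1 / INR tau0). split; [lra|]. split; [exact Ha|]. split; [|exact Sec].
    intros ell Hl r s Hr Hrs HsT Hlen q Hq. apply decomp; auto. intros j Hj.
    assert (j = 0%nat) by lia; subst j. rewrite d1_zero by exact Ha. apply sqrt_pos.
  - assert (Hlnd : 0 < ln (INR d)).
    { rewrite <- ln_1. apply ln_increasing. lra. replace 1 with (INR 1) by reflexivity. apply lt_INR; lia. }
    assert (HL : 0 < L) by (unfold L; lra).
    set (eta := sqrt (8 * L / INR tau0)).
    assert (He : 0 < eta) by (apply sqrt_lt_R0; apply Rdiv_lt_0_compat; lra).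
    assert (He2 : eta ^ 2 = 8 * L / INR tau0).
    { unfold eta. simpl. rewrite Rmult_1_r. apply sqrt_sqrt. left; apply Rdiv_lt_0_compat; lra. }
    assert (HeB : eta * sqrt (INR tau0 / 2 * L) = 2 * L).
    { unfold eta. rewrite <- sqrt_mult by (left; try apply Rdiv_lt_0_compat; try apply Rmult_lt_0_compat; lra).
      replace (8 * L / INR tau0 * (INR tau0 / 2 * L)) with ((2 * L) * (2 * L)) by (field; lra).
      apply sqrt_square. lra. }
    exists eta, (1 / INR tau0). split; [exact He|]. split; [exact Ha|]. split; [|exact Sec].
    intros ell Hl r s Hr Hrs HsT Hlen q Hq. apply decomp; auto. intros j Hj.
    pose proof (core d T tau0 eta ell r s j Hd Htau1 He Hl Hr Hrs HsT Hlen Hj) as C.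
    apply (Rmult_le_reg_l eta); auto. fold L. rewrite HeB.
    assert (INR tau0 * eta ^ 2 / 8 = L) by (rewrite He2; field; lra).
    unfold L in *. lra.
Qed.
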